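(* Let $f_0\colon X\hookrightarrow Y_0$ and $f_1\colon X\hookrightarrow Y_1$ be embeddings in $\mathbf{MetCH_{sep}}$ and let $\lambda_0\colon Y_0\to P$, $\lambda_1\colon Y_1\to P$ (with $\lambda_0\circ f_0=\lambda_1\circ f_1$) be their pushout in $\mathbf{MetCH_{sep}}$. Then for all $i,j\in\{0,1\}$, $u\in Y_i$, $v\in Y_j$: $$d_P(\lambda_i(u),\lambda_j(v))=\begin{cases} d_{Y_i}(u,v) & \text{if } i=j,\\ \inf_{x\in X}\big(d_{Y_i}(u,f_i(x))+d_{Y_j}(f_j(x),v)\big) & \text{if } i\neq j.\end{cases}$$
   Context: A metric on a set $X$ is a map $d\colon X\times X\to[0,\infty]$ with $d(x,x)=0$ and $d(x,z)\le d(x,y)+d(y,z)$ (not necessarily symmetric, $\infty$ allowed); separated means $d(x,y)=0=d(y,x)$ implies $x=y$. A separated metric compact Hausdorff space is a compact Hausdorff space with a separated metric $d\colon X\times X\to[0,\infty]$ continuous with respect to the upper topology on $[0,\infty]$ (open sets $]u,\infty]$, plus $\emptyset$ and $[0,\infty]$). $\mathbf{MetCH_{sep}}$: these spaces with continuous non-expansive maps as morphisms. An embedding is an injective morphism $f$ with $d_X(x,y)=d_Y(f(x),f(y))$ for all $x,y$. *)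

(* Defs.v *)
From HB Require Import structures.
From mathcomp Require Import all_boot all_order all_algebra.
From mathcomp Require Import all_classical all_reals all_analysis.
Set Implicit Arguments. Unset Strict Implicit. Unset Printing Implicit Defensive.
Import Order.TTheory GRing.Theory Num.Theory.
Local Open Scope classical_set_scope.
Local Open Scope ring_scope.
Local Open Scope ereal_scope.

(* Objects of MetCH_sep: compact Hausdorff spaces with a separated
   (possibly asymmetric, possibly infinite) metric d : X*X -> [0,+oo]
   which is continuous for the upper topology on [0,+oo], i.e.
   {(x,y) | u < d(x,y)} is open in X*X for every u. *)
Record metch (R : realType) := MetCH {
  mc_car :> topologicalType;
  mc_d : mc_car -> mc_car -> \bar R;
  mc_hausdorff : hausdorff_space mc_car;
  mc_compact : compact [set: mc_car];
  mc_d_ge0 : forall x y, 0 <= mc_d x y;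
  mc_d_refl : forall x, mc_d x x = 0;
  mc_d_tri : forall x y z, mc_d x z <= mc_d x y + mc_d y z;
  mc_d_sep : forall x y, mc_d x y = 0 -> mc_d y x = 0 -> x = y;
  mc_d_usc : forall u : R, open [set p : mc_car * mc_car | u%:E < mc_d p.1 p.2]
}.

Definition metch_mor (R : realType) (X Y : metch R) (f : X -> Y) : Prop :=
  continuous f /\ forall x y, @mc_d R Y (f x) (f y) <= @mc_d R X x y.

Definition metch_emb (R : realType) (X Y : metch R) (f : X -> Y) : Prop :=
  metch_mor f /\ injective f /\ forall x y, @mc_d R Y (f x) (f y) = @mc_d R X x y.

Definition metch_pushout (R : realType) (X Y0 Y1 P : metch R)
  (f0 : X -> Y0) (f1 : X -> Y1) (l0 : Y0 -> P) (l1 : Y1 -> P) : Prop :=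
  [/\ metch_mor l0, metch_mor l1, l0 \o f0 = l1 \o f1 &
    forall (Q : metch R) (g0 : Y0 -> Q) (g1 : Y1 -> Q),
      metch_mor g0 -> metch_mor g1 -> g0 \o f0 = g1 \o f1 ->
      exists! h : P -> Q, [/\ metch_mor h, h \o l0 = g0 & h \o l1 = g1]].

(* Main.v *)
Require Import Defs.
From HB Require Import structures.
From mathcomp Require Import all_boot all_order all_algebra.
From mathcomp Require Import all_classical all_reals all_analysis.
From mathcomp Require Import generic_quotient lra.
From Stdlib Require Import Eqdep_dec.
Set Implicit Arguments. Unset Strict Implicit. Unset Printing Implicit Defensive.
Import Order.TTheory GRing.Theory Num.Theory.
Local Open Scope classical_set_scope.
Local Open Scope ring_scope.
Local Open Scope ereal_scope.

Section EHelpers.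
Variable R : realType.

Lemma le_addinf (z u : \bar R) (S : set (\bar R)) : 0 <= u ->
  (forall s, S s -> 0 <= s) -> (forall s, S s -> z <= u + s) ->
  z <= u + ereal_inf S.
Proof.
move=> u0 S0 H.
have i0 : 0 <= ereal_inf S by apply/ereal_infP.
case: u u0 H => [u| |] // u0 H.
- rewrite addeC -leeBlDr //; apply/ereal_infP => s Ss.
  by rewrite leeBlDr // addeC; exact: H.
- rewrite addye ?leey //; by apply: contraTneq i0 => ->.
Qed.

Lemma split_lt (r : R) (u v : \bar R) : 0 <= u -> 0 <= v -> r%:E < u + v ->
  exists s : R, s%:E < u /\ (r - s)%:E < v.
Proof.
move=> hu hv h.
case: u hu h => [u| |] hu h; case: v hv h => [v| |] hv h;
  try by move: hu hv; rewrite ?leeNy_eq.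
- exists (u - (u + v - r) / 2)%R; rewrite !lte_fin.
  move: h; rewrite -EFinD lte_fin => h; split; lra.
- by exists (u - 1)%R; rewrite !lte_fin ltey; split => //; lra.
- by exists (r - v + 1)%R; rewrite !lte_fin ltey; split => //; lra.
- by exists 0%R; rewrite !ltey.
Qed.

Lemma exists_between (r : R) (y : \bar R) : r%:E < y ->
  exists r' : R, (r < r')%R /\ r'%:E < y.
Proof.
case: y => [y| |] // h.
- exists ((r + y) / 2)%R; move: h; rewrite !lte_fin => h; split; lra.
- by exists (r + 1)%R; rewrite ltey; split => //; lra.
Qed.

End EHelpers.
Arguments split_lt {R r u v}.
Arguments exists_between {R r y}.
Arguments le_addinf {R z u S}.

Definition cross (R : realType) (X A B : metch R) (fa : X -> A) (fb : X -> B)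
  (a : A) (b : B) : \bar R :=
  ereal_inf [set @mc_d R A a (fa x) + @mc_d R B (fb x) b | x in [set: X]].

Arguments cross {R X A B}.

Lemma cross_ge0 (R : realType) (X A B : metch R) (fa : X -> A) (fb : X -> B) a b :
  0 <= cross fa fb a b.
Proof. by apply/ereal_infP => _ [x _ <-]; rewrite adde_ge0 // mc_d_ge0. Qed.

Section Cross.
Variables (R : realType) (X A B : metch R) (fa : X -> A) (fb : X -> B).
Hypotheses (ea : metch_emb fa) (eb : metch_emb fb).
Local Notation dA := (@mc_d R A).
Local Notation dB := (@mc_d R B).
Local Notation dX := (@mc_d R X).
Local Notation cr := (cross fa fb).

Lemma efa x y : dA (fa x) (fa y) = dX x y. Proof. by case: ea => _ [_ ->]. Qed.
Lemma efb x y : dB (fb x) (fb y) = dX x y. Proof. by case: eb => _ [_ ->]. Qed.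


Lemma cross_le a b x : cr a b <= dA a (fa x) + dB (fb x) b.
Proof. by apply: ereal_inf_lbound; exists x. Qed.

Lemma cross_fb a x : cr a (fb x) = dA a (fa x).
Proof.
apply/le_anti/andP; split; first by have := cross_le a (fb x) x; rewrite mc_d_refl adde0.
apply/ereal_infP => _ [y _ <-]; rewrite efb -(efa y x).
exact: mc_d_tri.
Qed.

Lemma cross_fa x b : cr (fa x) b = dB (fb x) b.
Proof.
apply/le_anti/andP; split; first by have := cross_le (fa x) b x; rewrite mc_d_refl add0e.
apply/ereal_infP => _ [y _ <-]; rewrite efa -(efb x y).
exact: mc_d_tri.
Qed.

Lemma cross_t1 a b c : cr a c <= dA a b + cr b c.
Proof.
apply: le_addinf; first exact: mc_d_ge0.
  by move=> _ [x _ <-]; rewrite adde_ge0 // mc_d_ge0.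
move=> _ [x _ <-]; apply: (le_trans (cross_le a c x)).
by rewrite addeA leeD2r // mc_d_tri.
Qed.

Lemma cross_t2 a b c : cr a c <= cr a b + dB b c.
Proof.
rewrite addeC; apply: le_addinf; first exact: mc_d_ge0.
  by move=> _ [x _ <-]; rewrite adde_ge0 // mc_d_ge0.
move=> _ [x _ <-]; apply: (le_trans (cross_le a c x)).
by rewrite [dB b c + _]addeC -addeA leeD2l // mc_d_tri.
Qed.

Lemma cross_t3 a b c : dA a c <= cr a b + cross fb fa b c.
Proof.
rewrite addeC; apply: le_addinf; first exact: cross_ge0.
  by move=> _ [x _ <-]; rewrite adde_ge0 // mc_d_ge0.
move=> _ [x _ <-]; rewrite addeC; apply: le_addinf.
- by rewrite adde_ge0 // mc_d_ge0.
- by move=> _ [y _ <-]; rewrite adde_ge0 // mc_d_ge0.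
move=> _ [y _ <-].
apply: (le_trans (mc_d_tri a (fa x) c)); rewrite -addeA leeD2l //.
apply: (le_trans (mc_d_tri (fa x) (fa y) c)); rewrite addeA leeD2r //.
by rewrite efa -efb mc_d_tri.
Qed.

Lemma cross_sum_lsc (s : R) a x b : s%:E < dA a (fa x) + dB (fb x) b ->
  \forall x' \near x & p \near (a, b), s%:E < dA p.1 (fa x') + dB (fb x') p.2.
Proof.
move=> /(split_lt (mc_d_ge0 _ _) (mc_d_ge0 _ _)) [t [h1 h2]].
have n1 : nbhs (a, fa x) [set q : A * A | t%:E < dA q.1 q.2].
  by apply: open_nbhs_nbhs; split; [exact: mc_d_usc|].
have n2 : nbhs (fb x, b) [set q : B * B | (s - t)%:E < dB q.1 q.2].
  by apply: open_nbhs_nbhs; split; [exact: mc_d_usc|].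
case: n1 => -[N1 M1] /= [N1a M1x] sub1.
case: n2 => -[M2 N2] /= [M2x N2b] sub2.
have c1 : nbhs x (fa @^-1` M1) := ea.1.1 x M1 M1x.
have c2 : nbhs x (fb @^-1` M2) := eb.1.1 x M2 M2x.
exists ((fa @^-1` M1) `&` (fb @^-1` M2), N1 `*` N2).
  by split; [exact: filterI | exists (N1, N2)].
case=> x' [a' b'] /= [[M1x' M2x'] [N1a' N2b']].
have -> : s%:E = t%:E + (s - t)%:E by rewrite -EFinD addrC subrK.
apply: lteD; [exact: (sub1 (a', fa x')) | exact: (sub2 (fb x', b'))].
Qed.

Lemma cross_lsc (r : R) : open [set p : A * B | r%:E < cr p.1 p.2].
Proof.
rewrite openE => -[a b] /= /exists_between [r' [rr' hr']].
have cK := (compact_near_coveringP _).1 (@mc_compact R X).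
have H := cK (A * B)%type (nbhs (a, b))
  (fun p x' => r'%:E < dA p.1 (fa x') + dB (fb x') p.2) (nbhs_filter _)
  (fun x _ => @cross_sum_lsc r' a x b (lt_le_trans hr' (cross_le a b x))).
rewrite /interior; apply: filterS H => p Hp /=.
apply: (@lt_le_trans _ _ r'%:E); first by rewrite lte_fin.
by apply/ereal_infP => _ [x _ <-]; exact/ltW/Hp.
Qed.

Lemma cross0_attained a b : cr a b = 0 ->
  exists x, dA a (fa x) = 0 /\ dB (fb x) b = 0.
Proof.
move=> h0; apply: contrapT => hn.
have pos x : 0%R%:E < dA a (fa x) + dB (fb x) b.
  rewrite lt0e adde_ge0 ?mc_d_ge0 // andbT; apply/negP => /eqP/eqP.
  rewrite padde_eq0 ?mc_d_ge0 // => /andP[/eqP h1 /eqP h2]; apply: hn; exists x.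
  by split.
have cK := (compact_near_coveringP _).1 (@mc_compact R X).
have hyp (x : X) : \forall x' \near x & e \near 0%R^'+,
    e%:E < dA a (fa x') + dB (fb x') b.
  have [s [s0 hs]] := exists_between (pos x).
  case: (@cross_sum_lsc s a x b hs) => -[U V] /= [Ux Vab] sub.
  exists (U, [set e | (e < s)%R]); first by split => //; exact: nbhs_right_lt.
  case=> x' e /= [Ux' es]; apply: (@lt_trans _ _ s%:E); first by rewrite lte_fin.
  by apply: (sub (x', (a, b))); split => //; exact: nbhs_singleton.
have H : \forall e \near 0%R^'+,
    [set: X] `<=` (fun x' => e%:E < dA a (fa x') + dB (fb x') b).
  by apply: cK => x _; exact: hyp x.
have [e [He e0]] := filter_ex (filterI H (nbhs_right_gt 0%R)).
have : e%:E <= cr a b by apply/ereal_infP => _ [x _ <-]; exact/ltW/He.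
by rewrite h0 lee_fin => /(lt_le_trans e0); rewrite ltxx.
Qed.

End Cross.


Lemma cross_glue (R : realType) (X A B : metch R) (fa : X -> A) (fb : X -> B)
  (ea : metch_emb fa) (eb : metch_emb fb) a b :
  cross fa fb a b = 0 -> cross fb fa b a = 0 -> exists x, a = fa x /\ b = fb x.
Proof.
move=> /(cross0_attained ea eb) [x [h1 h2]] /(cross0_attained eb ea) [y [h3 h4]].
have hxy : @mc_d R X x y = 0.
  apply/le_anti; rewrite mc_d_ge0 andbT -(efb eb) -h2 -[X in _ <= X]adde0 -h3.
  exact: mc_d_tri.
have hyx : @mc_d R X y x = 0.
  apply/le_anti; rewrite mc_d_ge0 andbT -(efa ea) -h4 -[X in _ <= X]adde0 -h1.
  exact: mc_d_tri.
exists x; split.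
- apply: mc_d_sep => //; apply/le_anti; rewrite mc_d_ge0 andbT -h4 -[X in _ <= X]add0e.
  by rewrite -hxy -(efa ea); exact: mc_d_tri.
- apply: mc_d_sep => //; apply/le_anti; rewrite mc_d_ge0 andbT -h3 -[X in _ <= X]adde0.
  by rewrite -hyx -(efb eb); exact: mc_d_tri.
Qed.

Section Pushout.
Variables (R : realType) (X A B : metch R) (fa : X -> A) (fb : X -> B).
Hypotheses (ea : metch_emb fa) (eb : metch_emb fb).
Local Notation dA := (@mc_d R A).
Local Notation dB := (@mc_d R B).

Definition Xf (i : bool) : topologicalType := if i then (A : topologicalType) else (B : topologicalType).
Definition S := {i : bool & Xf i}.
Definition iA (a : A) : S := existT Xf true a.
Definition iB (b : B) : S := existT Xf false b.

Definition Dm (z w : S) : \bar R :=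
  match z, w with
  | existT true a, existT true a' => @mc_d R A a a'
  | existT true a, existT false b => cross fa fb a b
  | existT false b, existT true a => cross fb fa b a
  | existT false b, existT false b' => @mc_d R B b b'
  end.

Lemma Dm_AA a a' : Dm (iA a) (iA a') = dA a a'. Proof. by []. Qed.
Lemma Dm_AB a b : Dm (iA a) (iB b) = cross fa fb a b. Proof. by []. Qed.
Lemma Dm_BA b a : Dm (iB b) (iA a) = cross fb fa b a. Proof. by []. Qed.
Lemma Dm_BB b b' : Dm (iB b) (iB b') = dB b b'. Proof. by []. Qed.

Lemma S_case (P : S -> Prop) : (forall a, P (iA a)) -> (forall b, P (iB b)) -> forall z, P z.
Proof. by move=> hA hB [[] t]; [exact: hA | exact: hB]. Qed.

Lemma Dm_ge0 z w : 0 <= Dm z w.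
Proof.
by elim/S_case: z => ?; elim/S_case: w => ?;
  rewrite ?Dm_AA ?Dm_AB ?Dm_BA ?Dm_BB ?mc_d_ge0 ?cross_ge0.
Qed.

Lemma Dm_refl z : Dm z z = 0.
Proof. by elim/S_case: z => ?; rewrite ?Dm_AA ?Dm_BB mc_d_refl. Qed.

Lemma Dm_tri z w v : Dm z v <= Dm z w + Dm w v.
Proof.
elim/S_case: z => ?; elim/S_case: w => ?; elim/S_case: v => ?;
  rewrite ?Dm_AA ?Dm_AB ?Dm_BA ?Dm_BB.
- exact: mc_d_tri.
- exact: cross_t1.
- exact: cross_t3.
- exact: cross_t2.
- exact: cross_t2.
- exact: cross_t3.
- exact: cross_t1.
- exact: mc_d_tri.
Qed.

Lemma iA_inj : injective iA.
Proof. by move=> a a' h; exact: (inj_pair2_eq_dec _ Bool.bool_dec _ _ _ _ h). Qed.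
Lemma iB_inj : injective iB.
Proof. by move=> a a' h; exact: (inj_pair2_eq_dec _ Bool.bool_dec _ _ _ _ h). Qed.
Lemma iAB_neq a b : iA a <> iB b.
Proof. by move=> h; have := congr1 (@projT1 bool Xf) h. Qed.

Lemma lsc_lift (r : R) (i j : bool) (O : set (Xf i * Xf j)) (x : Xf i) (y : Xf j) :
  open O -> O (x, y) ->
  (forall x' y', O (x', y') -> r%:E < Dm (existT Xf i x') (existT Xf j y')) ->
  exists N N', [/\ nbhs (existT Xf i x) N, nbhs (existT Xf j y) N' &
    forall z' w', N z' -> N' w' -> r%:E < Dm z' w'].
Proof.
move=> oO Oxy H; have := open_nbhs_nbhs (conj oO Oxy).
case=> -[U V] /= [Ux Vy] sub.
exists (existT Xf i @` U), (existT Xf j @` V); split; [exact: existT_nbhs | exact: existT_nbhs|].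
by move=> _ _ [x' Ux' <-] [y' Vy' <-]; apply: H; exact: (sub (x', y')).
Qed.

Lemma Dm_lsc (r : R) z w : r%:E < Dm z w ->
  exists N N', [/\ nbhs z N, nbhs w N' &
    forall z' w', N z' -> N' w' -> r%:E < Dm z' w'].
Proof.
elim/S_case: z => a; elim/S_case: w => b h.
- apply: (@lsc_lift r true true [set p | r%:E < dA p.1 p.2]) => //.
  exact: (@mc_d_usc R A r).
- apply: (@lsc_lift r true false [set p | r%:E < cross fa fb p.1 p.2]) => //.
  exact (cross_lsc ea eb (r:=r)).
- apply: (@lsc_lift r false true [set p | r%:E < cross fb fa p.1 p.2]) => //.
  exact (cross_lsc eb ea (r:=r)).
- apply: (@lsc_lift r false false [set p | r%:E < dB p.1 p.2]) => //.
  exact: (@mc_d_usc R B r).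
Qed.

Lemma Dm0_tri z w v : Dm z w = 0 -> Dm w v = 0 -> Dm z v = 0.
Proof.
move=> h1 h2; apply/le_anti; rewrite Dm_ge0 andbT.
by have := Dm_tri z w v; rewrite h1 h2 adde0.
Qed.

Definition eqv : rel S := fun z w => `[< Dm z w = 0 /\ Dm w z = 0 >].

Lemma eqvP z w : eqv z w <-> Dm z w = 0 /\ Dm w z = 0.
Proof. by split => /asboolP. Qed.

Lemma eqv_refl : reflexive eqv.
Proof. by move=> z; apply/eqvP; rewrite Dm_refl. Qed.
Lemma eqv_sym : symmetric eqv.
Proof. by move=> z w; apply/idP/idP => /eqvP [h1 h2]; apply/eqvP. Qed.
Lemma eqv_trans : transitive eqv.
Proof.
move=> w z v /eqvP [h1 h2] /eqvP [h3 h4]; apply/eqvP.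
by split; [exact: (Dm0_tri h1 h3) | exact: (Dm0_tri h4 h2)].
Qed.

Definition eqvR : equiv_rel S := EquivRel eqv eqv_refl eqv_sym eqv_trans.

Definition C := quotient_topology {eq_quot eqvR}%qT.
Definition piC : S -> C := (\pi_C)%qT.

Lemma piCP z w : piC z = piC w <-> eqv z w.
Proof.
have := @eqquotP S eqvR {eq_quot eqvR}%qT z w => h; split.
  by move=> H; apply/h; exact: H.
by move/h.
Qed.

Lemma piC_repr (c : C) : piC (repr c) = c. Proof. exact: reprK. Qed.

Lemma piC_cont : continuous piC. Proof. exact: pi_continuous. Qed.

Lemma Dm_inv z z' w w' : eqv z z' -> eqv w w' -> Dm z w = Dm z' w'.
Proof.
move=> /eqvP [h1 h2] /eqvP [h3 h4]; apply/le_anti/andP; split.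
- apply: (le_trans (Dm_tri z z' w)); rewrite h1 add0e.
  by apply: (le_trans (Dm_tri z' w' w)); rewrite h4 adde0.
- apply: (le_trans (Dm_tri z' z w')); rewrite h2 add0e.
  by apply: (le_trans (Dm_tri z w w')); rewrite h3 adde0.
Qed.

Definition DC (c c' : C) : \bar R := Dm (repr c) (repr c').

Lemma DC_pi z w : DC (piC z) (piC w) = Dm z w.
Proof.
by apply: Dm_inv; apply/piCP; rewrite piC_repr.
Qed.

Lemma eqv_cases z w : eqv z w -> w = z \/
  (exists x, z = iA (fa x) /\ w = iB (fb x)) \/
  (exists x, z = iB (fb x) /\ w = iA (fa x)).
Proof.
elim/S_case: z => a; elim/S_case: w => b /eqvP [h1 h2].
- by left; congr iA; exact: mc_d_sep h2 h1.
- have [x [-> ->]] := cross_glue ea eb h1 h2; by right; left; exists x.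
- have [x [-> ->]] := cross_glue eb ea h1 h2; by right; right; exists x.
- by left; congr iB; exact: mc_d_sep h2 h1.
Qed.

Lemma glue x : piC (iA (fa x)) = piC (iB (fb x)).
Proof.
apply/piCP/eqvP; rewrite Dm_AB Dm_BA (cross_fb ea eb) (cross_fa eb ea).
by rewrite !mc_d_refl.
Qed.

Lemma open_avoid (T : topologicalType) (hT : hausdorff_space T) (g : X -> T)
  (W : set X) : continuous g -> open W -> open [set t | forall x, t = g x -> W x].
Proof.
move=> gc oW.
have -> : [set t | forall x, t = g x -> W x] = ~` (g @` ~` W).
  apply/seteqP; split => t /=.
  - by move=> H [x nWx gxt]; apply: nWx; apply: H.
  - by move=> H x tgx; apply: contrapT => nW; apply: H; exists x.
rewrite openC; apply: compact_closed => //.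
apply: continuous_compact; first exact: continuous_subspaceT.
apply: (subclosed_compact _ (@mc_compact R X)) => //.
exact: open_closedC.
Qed.

Lemma open_pre_shrink (V : set S) : open V ->
  open [set z : S | forall w, piC w = piC z -> V w].
Proof.
move=> oV; apply/sigT_openP => -[].
- have -> : existT Xf true @^-1` [set z : S | forall w, piC w = piC z -> V w] =
    (iA @^-1` V) `&` [set a : A | forall x, a = fa x -> (iB \o fb) x \in V].
    apply/seteqP; split => a /=.
    + move=> H; split; first exact: H.
      by move=> x ax; rewrite inE; apply: H; rewrite ax -glue.
    + move=> [Va H] w /piCP; rewrite eqv_sym => /eqv_cases [->//|[[x [h ->]]|[x [h _]]]].
      * by have := H x (iA_inj h); rewrite inE.
      * by move: h; move/iAB_neq.
  apply: openI; first by move/continuousP: (@existT_continuous _ Xf true); apply.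
  apply: (open_avoid (@mc_hausdorff R A)); first by case: ea => -[].
  rewrite (_ : (fun x => _) = (iB \o fb) @^-1` V); last first.
    by apply/funext => x; rewrite /preimage /= inE.
  move/continuousP: (@existT_continuous _ Xf false) => /(_ _ oV) oV'.
  by case: eb => -[cb _] _; move/continuousP: cb => /(_ _ oV').
- have -> : existT Xf false @^-1` [set z : S | forall w, piC w = piC z -> V w] =
    (iB @^-1` V) `&` [set b : B | forall x, b = fb x -> (iA \o fa) x \in V].
    apply/seteqP; split => b /=.
    + move=> H; split; first exact: H.
      by move=> x bx; rewrite inE; apply: H; rewrite bx glue.
    + move=> [Vb H] w /piCP; rewrite eqv_sym => /eqv_cases [->//|[[x [h _]]|[x [h ->]]]].
      * by move: h => /esym /iAB_neq.
      * by have := H x (iB_inj h); rewrite inE.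
  apply: openI; first by move/continuousP: (@existT_continuous _ Xf false); apply.
  apply: (open_avoid (@mc_hausdorff R B)); first by case: eb => -[].
  rewrite (_ : (fun x => _) = (iA \o fa) @^-1` V); last first.
    by apply/funext => x; rewrite /preimage /= inE.
  move/continuousP: (@existT_continuous _ Xf true) => /(_ _ oV) oV'.
  by case: ea => -[ca _] _; move/continuousP: ca => /(_ _ oV').
Qed.

Lemma nbhs_shrink (c : C) (U : set S) : (forall z, piC z = c -> nbhs z U) ->
  nbhs c [set c1 | forall z, piC z = c1 -> U z].
Proof.
move=> H.
pose O : set C := [set c1 | forall z, piC z = c1 -> U° z].
have oO : open O by exact: (open_pre_shrink (open_interior U)).
have Oc : O c by move=> z /H.
apply: (filterS _ (open_nbhs_nbhs (conj oO Oc))) => c1 Oc1 z hz.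
exact: interior_subset (Oc1 z hz).
Qed.

Lemma C_compact : compact [set: C].
Proof.
have -> : [set: C] = piC @` [set: S].
  by apply/seteqP; split => // c _; exists (repr c) => //; exact: piC_repr.
apply: continuous_compact; first exact/continuous_subspaceT/piC_cont.
apply: sigT_compact; first exact: finite_finset.
by case; exact: mc_compact.
Qed.

Lemma reps2 (c : C) : exists w0 w1, [/\ piC w0 = c, piC w1 = c &
  forall w, piC w = c -> w = w0 \/ w = w1].
Proof.
have h0 := piC_repr c; set w0 := repr c in h0 *.
have [[w1 [h1 n1]]|none] := pselect (exists w1, piC w1 = c /\ w1 <> w0); last first.
  exists w0, w0; split => // w hw; left; apply: contrapT => nw; apply: none.
  by exists w.
exists w0, w1; split => // w hw.
have /eqv_cases hc1 : eqv w0 w1 by apply/piCP; rewrite h0 h1.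
have /eqv_cases hc : eqv w0 w by apply/piCP; rewrite h0 hw.
case: hc => [->|[[x [e0 ->]]|[x [e0 ->]]]]; first by left.
- case: hc1 => [e|[[y [e1 ->]]|[y [e1 _]]]]; first by exfalso.
  + have e : iA (fa x) = iA (fa y) by rewrite -e0 -e1.
    by right; rewrite (ea.2.1 _ _ (iA_inj e)).
  + by exfalso; apply: (@iAB_neq (fa x) (fb y)); rewrite -e0 -e1.
- case: hc1 => [e|[[y [e1 _]]|[y [e1 ->]]]]; first by exfalso.
  + by exfalso; apply: (@iAB_neq (fa y) (fb x)); rewrite -e0 -e1.
  + have e : iB (fb x) = iB (fb y) by rewrite -e0 -e1.
    by right; rewrite (eb.2.1 _ _ (iB_inj e)).
Qed.

Lemma DC_lsc (r : R) : open [set p : C * C | r%:E < DC p.1 p.2].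
Proof.
rewrite openE => -[c c'] /= H.
have hex : forall zw : S * S, exists NN : set S * set S, r%:E < Dm zw.1 zw.2 ->
    [/\ nbhs zw.1 NN.1, nbhs zw.2 NN.2 &
      forall z' w', NN.1 z' -> NN.2 w' -> r%:E < Dm z' w'].
  move=> -[z w].
  have [h|h] := pselect (r%:E < Dm z w); last by exists (setT, setT).
  by have [M [M' [? ? ?]]] := Dm_lsc h; exists (M, M').
have [N hN] := choice hex.
have key z w : piC z = c -> piC w = c' -> r%:E < Dm z w.
  by move=> hz hw; rewrite -DC_pi hz hw.
pose U := [set z1 | exists2 z, piC z = c & forall w, piC w = c' -> (N (z, w)).1 z1].
pose U' := [set w1 | exists2 w, piC w = c' & forall z, piC z = c -> (N (z, w)).2 w1].
have [w0 [w1 [hw0 hw1 hw]]] := reps2 c'.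
have [z0 [z1 [hz0 hz1 hz]]] := reps2 c.
have nU : nbhs c [set c1 | forall z, piC z = c1 -> U z].
  apply: nbhs_shrink => z hzc.
  case: (hN (z, w0) (key z w0 hzc hw0)) => n0 _ _.
  case: (hN (z, w1) (key z w1 hzc hw1)) => n1 _ _.
  apply: filterS (filterI n0 n1) => t [t0 t1]; exists z => // w /hw [] ->//.
have nU' : nbhs c' [set c2 | forall w, piC w = c2 -> U' w].
  apply: nbhs_shrink => w hwc.
  case: (hN (z0, w) (key z0 w hz0 hwc)) => _ n0 _.
  case: (hN (z1, w) (key z1 w hz1 hwc)) => _ n1 _.
  apply: filterS (filterI n0 n1) => t [t0 t1]; exists w => // z /hz [] ->//.
rewrite /interior; exists ([set c1 | forall z, piC z = c1 -> U z],
                     [set c2 | forall w, piC w = c2 -> U' w]) => //.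
case=> c1 c2 /= [h1 h2].
have [z hzc hzN] := h1 (repr c1) (piC_repr c1).
have [w hwc hwN] := h2 (repr c2) (piC_repr c2).
have [_ _ ] := hN (z, w) (key z w hzc hwc); apply; [exact: hzN | exact: hwN].
Qed.

Lemma DC_ge0 c c' : 0 <= DC c c'. Proof. exact: Dm_ge0. Qed.
Lemma DC_refl c : DC c c = 0. Proof. exact: Dm_refl. Qed.
Lemma DC_tri c d e : DC c e <= DC c d + DC d e. Proof. exact: Dm_tri. Qed.
Lemma DC_sep c c' : DC c c' = 0 -> DC c' c = 0 -> c = c'.
Proof.
move=> h1 h2; rewrite -(piC_repr c) -(piC_repr c'); apply/piCP/eqvP; split; [exact: h1 | exact: h2].
Qed.

Lemma DC_haus : hausdorff_space C.
Proof.
move=> p q clpq; apply: contrapT => npq.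
have : ~ (DC p q = 0 /\ DC q p = 0) by case=> h1 h2; apply: npq; exact: DC_sep.
case/not_andP => hne.
- have pos : 0%R%:E < DC p q by rewrite lt0e DC_ge0 andbT; apply/eqP.
  have nb : nbhs (p, q) [set pq : C * C | 0%R%:E < DC pq.1 pq.2].
    by apply: open_nbhs_nbhs; split; [exact: DC_lsc | exact: pos].
  case: nb => -[W W'] /= [Wp W'q] sub.
  have [t [Wt W't]] := clpq W W' Wp W'q.
  by have := sub (t, t) (conj Wt W't); rewrite /= DC_refl ltxx.
- have pos : 0%R%:E < DC q p by rewrite lt0e DC_ge0 andbT; apply/eqP.
  have nb : nbhs (q, p) [set pq : C * C | 0%R%:E < DC pq.1 pq.2].
    by apply: open_nbhs_nbhs; split; [exact: DC_lsc | exact: pos].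
  case: nb => -[W' W] /= [W'q Wp] sub.
  have [t [Wt W't]] := clpq W W' Wp W'q.
  by have := sub (t, t) (conj W't Wt); rewrite /= DC_refl ltxx.
Qed.

Definition Qm : metch R :=
  @MetCH R C DC DC_haus C_compact DC_ge0 DC_refl DC_tri DC_sep DC_lsc.

Definition g0 (a : A) : Qm := piC (iA a).
Definition g1 (b : B) : Qm := piC (iB b).

Lemma g0_mor : metch_mor g0.
Proof.
split; last by move=> x y; rewrite /= /g0 DC_pi Dm_AA.
have -> : g0 = piC \o iA by [].
move=> a; apply: continuous_comp; [exact: existT_continuous | exact: piC_cont].
Qed.

Lemma g1_mor : metch_mor g1.
Proof.
split; last by move=> x y; rewrite /= /g1 DC_pi Dm_BB.
have -> : g1 = piC \o iB by [].
move=> b; apply: continuous_comp; [exact: existT_continuous | exact: piC_cont].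
Qed.

Lemma g_comm : g0 \o fa = g1 \o fb.
Proof. by apply/funext => x; rewrite /= /g0 /g1 glue. Qed.

Lemma g00 u v : @mc_d R Qm (g0 u) (g0 v) = dA u v.
Proof. by rewrite /= /g0 DC_pi. Qed.
Lemma g11 u v : @mc_d R Qm (g1 u) (g1 v) = dB u v.
Proof. by rewrite /= /g1 DC_pi. Qed.
Lemma g01 u v : @mc_d R Qm (g0 u) (g1 v) = cross fa fb u v.
Proof. by rewrite /= /g0 /g1 DC_pi. Qed.
Lemma g10 u v : @mc_d R Qm (g1 u) (g0 v) = cross fb fa u v.
Proof. by rewrite /= /g0 /g1 DC_pi. Qed.

End Pushout.

Unset Implicit Arguments.

Theorem corollary4p3 (R : realType) (X Y0 Y1 P : metch R)
  (f0 : X -> Y0) (f1 : X -> Y1) (l0 : Y0 -> P) (l1 : Y1 -> P) :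
  metch_emb f0 -> metch_emb f1 -> metch_pushout f0 f1 l0 l1 ->
  [/\ (forall u v : Y0, @mc_d R P (l0 u) (l0 v) = @mc_d R Y0 u v),
      (forall u v : Y1, @mc_d R P (l1 u) (l1 v) = @mc_d R Y1 u v),
      (forall (u : Y0) (v : Y1), @mc_d R P (l0 u) (l1 v) =
         ereal_inf [set @mc_d R Y0 u (f0 x) + @mc_d R Y1 (f1 x) v | x in [set: X]]) &
      (forall (u : Y1) (v : Y0), @mc_d R P (l1 u) (l0 v) =
         ereal_inf [set @mc_d R Y1 u (f1 x) + @mc_d R Y0 (f0 x) v | x in [set: X]])].
Proof.
move=> e0 e1 [m0 m1 comm univ].
have [h [[mh eh0 eh1] _]] := univ _ _ _ (g0_mor e0 e1) (g1_mor e0 e1) (g_comm e0 e1).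
have hl0 u : h (l0 u) = g0 e0 e1 u by rewrite -eh0.
have hl1 u : h (l1 u) = g1 e0 e1 u by rewrite -eh1.
have c x : l0 (f0 x) = l1 (f1 x) by have := congr1 (fun f => f x) comm.
split.
- move=> u v; apply/le_anti/andP; split; first exact: m0.2.
  by have := mh.2 (l0 u) (l0 v); rewrite !hl0 g00.
- move=> u v; apply/le_anti/andP; split; first exact: m1.2.
  by have := mh.2 (l1 u) (l1 v); rewrite !hl1 g11.
- move=> u v; apply/le_anti/andP; split.
  + apply/ereal_infP => _ [x _ <-].
    apply: (le_trans (mc_d_tri _ (l0 (f0 x)) _)).
    have h1 := m1.2 (f1 x) v; rewrite -c in h1.
    by apply: leeD; [exact: m0.2 | exact: h1].
  + by have := mh.2 (l0 u) (l1 v); rewrite hl0 hl1 g01.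
- move=> u v; apply/le_anti/andP; split.
  + apply/ereal_infP => _ [x _ <-].
    apply: (le_trans (mc_d_tri _ (l1 (f1 x)) _)).
    have h1 := m0.2 (f0 x) v; rewrite c in h1.
    by apply: leeD; [exact: m1.2 | exact: h1].
  + by have := mh.2 (l1 u) (l0 v); rewrite hl0 hl1 g10.
Qed.
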